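(* Let $F:\mathbb{R}^n\to\mathbb{R}$ be convex and $1$-smooth, let $x^\star$ be a minimizer of $F$ and $F^\star=F(x^\star)$. Let $k\ge1$, $N=2^k-1$, and let $(h_0,\dots,h_{N-1})=\pi_k$ be the silver stepsize schedule. Let $x^0\in\mathbb{R}^n$ and $x^{i+1}=x^i-h_i\nabla F(x^i)$ for $i=0,\dots,N-1$. Then, with $\rho=1+\sqrt2$ and writing $Q_i=F^\star-F(x^i)-\langle\nabla F(x^i),x^\star-x^i\rangle-\tfrac12\|\nabla F(x^i)\|^2$, $$(2\rho^k-1)\big(F^\star-F(x^N)\big)+\tfrac12\|x^0-x^\star\|^2-\sum_{i=0}^{N-1}h_iQ_i-\rho^kQ_N-\tfrac12\big\|x^N-\rho^k\nabla F(x^N)-x^\star\big\|^2\ge0.$$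
   Context: A differentiable convex function $F$ is $1$-smooth if $\nabla F$ is $1$-Lipschitz (equivalently $\nabla F$ is $1$-cocoercive). The silver ratio is $\rho=1+\sqrt2$. The silver stepsize schedule $\pi_k\in\mathbb{R}^{2^k-1}$ is defined recursively by $\pi_1=(\sqrt2)$ and $\pi_{k+1}=(\pi_k,\ 1+\rho^{k-1},\ \pi_k)$ (concatenation). *)

(* Defs.v *)
From HB Require Import structures.
From mathcomp Require Import all_boot all_order all_algebra.
From mathcomp Require Import all_classical all_reals all_analysis.
Set Implicit Arguments. Unset Strict Implicit. Unset Printing Implicit Defensive.
Import Order.TTheory GRing.Theory Num.Theory.
Import numFieldNormedType.Exports.
Local Open Scope ring_scope.

Definition dotv {R : realType} {n : nat} (u v : 'rV[R]_n) : R :=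
  \sum_(i < n) u ord0 i * v ord0 i.
Definition enorm {R : realType} {n : nat} (u : 'rV[R]_n) : R :=
  Num.sqrt (dotv u u).

Definition is_gradient {R : realType} {n : nat}
  (F : 'rV[R]_n -> R) (g : 'rV[R]_n -> 'rV[R]_n) : Prop :=
  forall x, differentiable F x /\ forall h, ('d F x : 'rV[R]_n -> R) h = dotv (g x) h.

Definition convex_fun {R : realType} {n : nat} (F : 'rV[R]_n -> R) : Prop :=
  forall x y (t : R), 0 <= t -> t <= 1 ->
    F ((1 - t) *: x + t *: y) <= (1 - t) * F x + t * F y.

Definition one_smooth {R : realType} {n : nat} (g : 'rV[R]_n -> 'rV[R]_n) : Prop :=
  forall x y, enorm (g x - g y) <= enorm (x - y).

Definition silver_ratio {R : realType} : R := 1 + Num.sqrt 2.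

(* silver stepsize schedule pi_k (pi_0 := [::], unused) *)
Fixpoint silver {R : realType} (k : nat) : seq R :=
  match k with
  | 0 => [::]
  | 1 => [:: Num.sqrt 2]
  | k'.+1 => silver k' ++ (1 + silver_ratio ^+ (k'.-1)) :: silver k'
  end.

Fixpoint gd_iter {R : realType} {n : nat} (g : 'rV[R]_n -> 'rV[R]_n)
  (hs : seq R) (x0 : 'rV[R]_n) (i : nat) : 'rV[R]_n :=
  match i with
  | 0 => x0
  | i'.+1 => let x := gd_iter g hs x0 i' in x - nth 0 hs i' *: g x
  end.

(* Main.v *)
Require Import Defs.
From HB Require Import structures.
From mathcomp Require Import all_boot all_order all_algebra.
From mathcomp Require Import all_classical all_reals all_analysis.
From mathcomp Require Import ring lra zify.
Import Order.TTheory GRing.Theory Num.Theory.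
Import numFieldNormedType.Exports.
Local Open Scope ring_scope.


Section Dot.
Context {R : realType} {n : nat}.
Implicit Types u v w : 'rV[R]_n.

Lemma dotvC u v : dotv u v = dotv v u.
Proof. by rewrite /dotv; apply: eq_bigr => i _; rewrite mulrC. Qed.
Lemma dotvDl u v w : dotv (u + v) w = dotv u w + dotv v w.
Proof. by rewrite /dotv -big_split; apply: eq_bigr => i _; rewrite !mxE mulrDl. Qed.
Lemma dotvDr u v w : dotv w (u + v) = dotv w u + dotv w v.
Proof. by rewrite dotvC dotvDl !(dotvC w). Qed.
Lemma dotvZl a u v : dotv (a *: u) v = a * dotv u v.
Proof. by rewrite /dotv mulr_sumr; apply: eq_bigr => i _; rewrite !mxE mulrA. Qed.
Lemma dotvZr a u v : dotv u (a *: v) = a * dotv u v.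
Proof. by rewrite dotvC dotvZl dotvC. Qed.
Lemma dotvNl u v : dotv (- u) v = - dotv u v.
Proof. by rewrite -scaleN1r dotvZl mulN1r. Qed.
Lemma dotvNr u v : dotv u (- v) = - dotv u v.
Proof. by rewrite dotvC dotvNl dotvC. Qed.
Lemma dotvBl u v w : dotv (u - v) w = dotv u w - dotv v w.
Proof. by rewrite dotvDl dotvNl. Qed.
Lemma dotvBr u v w : dotv w (u - v) = dotv w u - dotv w v.
Proof. by rewrite dotvDr dotvNr. Qed.
Lemma dotv0l v : dotv 0 v = 0.
Proof. by rewrite -(scale0r 0) dotvZl mul0r. Qed.
Lemma dotv0r v : dotv v 0 = 0.
Proof. by rewrite dotvC dotv0l. Qed.
Lemma dotv_ge0 u : 0 <= dotv u u.
Proof. by rewrite /dotv; apply: sumr_ge0 => i _; rewrite -expr2 sqr_ge0. Qed.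
Lemma enorm_sq u : enorm u ^+ 2 = dotv u u.
Proof. by rewrite /enorm sqr_sqrtr // dotv_ge0. Qed.
Lemma enorm_le_sq u v : enorm u <= enorm v -> dotv u u <= dotv v v.
Proof. by rewrite /enorm ler_sqrt // dotv_ge0. Qed.
End Dot.
Section Dot2.
Context {R : realType} {n : nat}.
Implicit Types u v w : 'rV[R]_n.
Lemma dotv_subZ u v (a : R) :
  dotv (u - a *: v) (u - a *: v) = dotv u u - 2 * a * dotv u v + a ^+ 2 * dotv v v.
Proof.
rewrite !(dotvBl, dotvBr, dotvZl, dotvZr) (dotvC v u); ring.
Qed.
End Dot2.


Section Desc.
Open Scope classical_set_scope.
Context {R : realType} {n : nat} (F : 'rV[R]_n -> R) (g : 'rV[R]_n -> 'rV[R]_n).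
Hypothesis gradF : is_gradient F g.

Lemma line_derive (x d : 'rV[R]_n) (t : R) :
  is_derive t 1 (fun s : R => F (s *: d + x)) (dotv (g (t *: d + x)) d).
Proof.
have E : (fun h : R => h^-1 *: (((fun s : R => F (s *: d + x)) \o shift t) (h *: 1) - F (t *: d + x)))
   = (fun h : R => h^-1 *: ((F \o shift (t *: d + x)) (h *: d) - F (t *: d + x))).
  apply/funext => h /=; congr (_ *: (F _ - _)).
  by rewrite [h%:A]mulr1 scalerDl addrA.
have [dF gF] := gradF (t *: d + x).
have dv : derivable F (t *: d + x) d by exact: diff_derivable.
apply: DeriveDef.
  by rewrite /derivable E.
by rewrite /derive E -/(derive F _ _) deriveE // gF.
Qed.

Lemma descent (Lg : one_smooth g) x d :
  F (d + x) <= F x + dotv (g x) d + 2^-1 * dotv d d.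
Proof.
set c1 := dotv (g x) d; set c2 := dotv d d.
have Hphi : forall s : R, is_derive s (1:R) (fun t => F (t *: d + x)) (dotv (g (s *: d + x)) d).
  exact: line_derive.
pose psi := fun t : R => F (t *: d + x) - (c1 * t + (2^-1 * c2) * (t * t)).
pose dpsi := fun s : R => dotv (g (s *: d + x)) d - (c1 *: (1:R) + (2^-1 * c2) *: (s *: (1:R) + s *: (1:R))).
have Hd : forall s : R, is_derive s (1:R) psi (dpsi s).
  by move=> s; apply: is_deriveB.
have Hc : {within `[0, 1], continuous psi}.
  apply: continuous_subspaceT => s.
  apply: differentiable_continuous; apply/derivable1_diffP.
  exact: (@ex_derive _ _ _ _ _ _ _ (Hd s)).
have [c cI Hmvt] := MVT ltr01 (fun s _ => Hd s) Hc.
move: cI; rewrite in_itv /= => /andP [c0 c1lt].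
have Hneg : dpsi c <= 0.
  have -> : dpsi c = dotv (g (c *: d + x)) d - c1 - c * c2.
    rewrite /dpsi; set G := dotv _ d; rewrite /GRing.scale /=.
    rewrite !mulr1; lra.
  set e := g (c *: d + x) - g x.
  have He : dotv (g (c *: d + x)) d - c1 = dotv e d by rewrite /e dotvBl.
  have Hl : dotv e e <= c ^+ 2 * c2.
    move: (Lg (c *: d + x) x) => /enorm_le_sq.
    by rewrite addrK dotvZl dotvZr /c2 mulrA -expr2.
  have Hp := dotv_ge0 (e - c *: d).
  rewrite dotv_subZ -/c2 in Hp.
  clearbody e.
  rewrite He.
  nra.
have : psi 1 - psi 0 <= 0.
  by rewrite Hmvt subr0 mulr1.
rewrite /psi scale1r scale0r add0r !mul0r !mulr0 !addr0 mulr1 subr0.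
lra.
Qed.

Lemma first_order (Lg : one_smooth g) (Cv : convex_fun F) x y :
  F x + dotv (g x) (y - x) <= F y.
Proof.
set d := y - x; set N := dotv d d; set G0 := dotv (g x) d.
have HN : 0 <= N by exact: dotv_ge0.
have key : forall t : R, 0 < t -> t <= 1 -> G0 <= F y - F x + 3 / 2 * t * N.
  move=> t t0 t1.
  set p := t *: d + x.
  have Hconv : F p <= (1 - t) * F x + t * F y.
    have -> : p = (1 - t) *: x + t *: y.
      by rewrite /p /d scalerBr scalerBl scale1r addrAC [RHS]addrC addrA.
    exact: Cv (ltW t0) t1.
  have Hdesc := descent Lg p (- (t *: d)).
  rewrite /p addKr dotvNr dotvNl dotvNr opprK !dotvZl !dotvZr -/N in Hdesc.
  set e := g p - g x.
  have He : dotv (g p) d = dotv e d + G0 by rewrite /e dotvBl /G0 subrK.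
  have Hl : dotv e e <= t ^+ 2 * N.
    move: (Lg p x) => /enorm_le_sq.
    by rewrite /p addrK dotvZl dotvZr /N mulrA -expr2.
  have Hp := dotv_ge0 (e - (- t) *: d).
  rewrite dotv_subZ -/N sqrrN in Hp.
  clearbody e.
  rewrite He in Hdesc.
  nra.
apply/ler_addgt0Pr => ep ep0.
set t := ep / (ep + 2 * N).
have Hpos : 0 < ep + 2 * N by lra.
have t0 : 0 < t by rewrite /t divr_gt0.
have tE : t * (ep + 2 * N) = ep by rewrite /t divfK // gt_eqF.
have t1 : t <= 1.
  rewrite /t ler_pdivrMr // mul1r; lra.
have := key t t0 t1.
nra.
Qed.

Lemma cocoercive (Lg : one_smooth g) (Cv : convex_fun F) x y :
  F x + dotv (g x) (y - x) + 2^-1 * dotv (g y - g x) (g y - g x) <= F y.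
Proof.
set D := g y - g x.
have H1 := descent Lg y (- D).
have H2 := first_order Lg Cv x (- D + y).
rewrite dotvNr dotvNl dotvNr opprK in H1.
have E2 : dotv (g x) (- D + y - x) = - dotv (g x) D + dotv (g x) (y - x).
  by rewrite -addrA dotvDr dotvNr.
have E3 : dotv (g y) D - dotv (g x) D = dotv D D by rewrite -dotvBl.
rewrite E2 in H2.
lra.
Qed.
End Desc.


Section Alg.
Context {R : realType} {n : nat} (F : 'rV[R]_n -> R) (g : 'rV[R]_n -> 'rV[R]_n).
Local Notation vec := 'rV[R]_n.

Definition nsq (u : vec) := dotv u u.
Definition Qcc (u v : vec) := F u - F v - dotv (g v) (u - v) - 2^-1 * nsq (g u - g v).
Definition Qref (z : vec) (phi : R) (v : vec) :=
  phi - F v - dotv (g v) (z - v) - 2^-1 * nsq (g v).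
Definition Bt (v : vec) := - F v + dotv (g v) v - 2^-1 * nsq (g v).

Definition Ek (s : seq R) (a : R) (y0 z : vec) (phi : R) : R :=
  (2 * a - 1) * (phi - F (gd_iter g s y0 (size s))) + 2^-1 * nsq (y0 - z)
  - \sum_(0 <= i < size s) nth 0 s i * Qref z phi (gd_iter g s y0 i)
  - a * Qref z phi (gd_iter g s y0 (size s))
  - 2^-1 * nsq (gd_iter g s y0 (size s) - a *: g (gd_iter g s y0 (size s)) - z).

Lemma gd_cat1 s c s2 y0 i : (i <= size s)%N ->
  gd_iter g (s ++ c :: s2) y0 i = gd_iter g s y0 i.
Proof.
elim: i => [//|i IH] Hi /=.
by rewrite IH ?(ltnW Hi) // nth_cat Hi.
Qed.

Lemma gd_cat2 s c s2 y0 t :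
  gd_iter g (s ++ c :: s2) y0 (t + (size s).+1) =
  gd_iter g s2 (gd_iter g s y0 (size s) - c *: g (gd_iter g s y0 (size s))) t.
Proof.
elim: t => [|t IH].
  by rewrite add0n /= gd_cat1 // nth_cat ltnn subnn.
rewrite addSn /= IH nth_cat.
have -> : (t + (size s).+1 < size s)%N = false by lia.
by have -> : (t + (size s).+1 - size s = t.+1)%N by lia.
Qed.

Lemma gd_tele s y0 N :
  gd_iter g s y0 N = y0 - \sum_(0 <= i < N) nth 0 s i *: g (gd_iter g s y0 i).
Proof.
elim: N => [|N IH]; first by rewrite big_geq // subr0.
by rewrite big_nat_recr //= IH opprD addrA.
Qed.

Lemma dotv_suml m N (u : nat -> vec) p :
  dotv (\sum_(m <= i < N) u i) p = \sum_(m <= i < N) dotv (u i) p.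
Proof.
elim/big_rec2: _ => [|i y1 y2 _ <-]; first by rewrite dotv0l.
by rewrite dotvDl.
Qed.

Lemma sum_Qref m N (w : nat -> R) (x : nat -> vec) p php :
  \sum_(m <= i < N) w i * Qref p php (x i) =
  (\sum_(m <= i < N) w i) * php + \sum_(m <= i < N) w i * Bt (x i)
  - dotv (\sum_(m <= i < N) w i *: g (x i)) p.
Proof.
rewrite dotv_suml mulr_suml -big_split -sumrB /=.
apply: eq_bigr => i _.
rewrite /Qref /Bt dotvZl dotvBr (dotvC (g (x i)) p).
ring.
Qed.

Lemma Qcc_ref u v : Qcc u v = Qref (u - g u) (F u - 2^-1 * nsq (g u)) v.
Proof.
rewrite /Qcc /Qref /nsq.
rewrite !(dotvBl, dotvBr) (dotvC (g u) (g v)).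
lra.
Qed.


Ltac dexp := rewrite /nsq ?(dotvDl, dotvDr, dotvBl, dotvBr, dotvZl, dotvZr, dotvNl, dotvNr).

Lemma Ek_base y0 z phi :
  let s2 := Num.sqrt (2:R) in
  Ek [:: s2] (1 + s2) y0 z phi =
  (1 + s2) * Qcc y0 (y0 - s2 *: g y0) + Qcc (y0 - s2 *: g y0) y0.
Proof.
move=> s2; rewrite /Ek /Qcc /Qref /= big_nat1 /=.
have Hs : s2 ^+ 2 = 2 by rewrite sqr_sqrtr // ler0n.
set G0 := g y0. set G1 := g (y0 - s2 *: G0). clearbody G0 G1.
dexp.
rewrite ?(dotvC z y0) ?(dotvC G0 y0) ?(dotvC G1 y0) ?(dotvC G0 z) ?(dotvC G1 z) ?(dotvC G1 G0).
by field: Hs.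
Qed.

Lemma Ek_step (s : seq R) (r b : R) y0 z phi :
  r ^+ 2 = 2 * r + 1 -> \sum_(0 <= i < size s) nth 0 s i = r * b - 1 ->
  let c := 1 + b in
  let xM := gd_iter g s y0 (size s) in
  let y1 := xM - c *: g xM in
  let x2 := gd_iter g s y1 in
  Ek (s ++ c :: s) (r * (r * b)) y0 z phi =
    Ek s (r * b) y0 z phi + r ^+ 2 * Ek s (r * b) y1 (xM - g xM) (F xM - 2^-1 * nsq (g xM))
    + r * \sum_(0 <= t < size s) nth 0 s t * (Qcc xM (x2 t) + Qcc (x2 (size s)) (x2 t))
    + r * Qcc xM (x2 (size s)) + r * b * Qcc (x2 (size s)) xM.
Proof.
move=> Hr Hsum c xM y1 x2.
set M := size s.
have e1 : forall i, (i <= M)%N -> gd_iter g (s ++ c :: s) y0 i = gd_iter g s y0 i.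
  by move=> i; apply: gd_cat1.
have e2 : forall t, gd_iter g (s ++ c :: s) y0 (t + M.+1) = x2 t.
  by move=> t; rewrite gd_cat2.
have sz : size (s ++ c :: s) = (M + M.+1)%N by rewrite size_cat.
have n1 : forall i, (i < M)%N -> nth 0 (s ++ c :: s) i = nth 0 s i.
  by move=> i Hi; rewrite nth_cat Hi.
have n2 : forall t, nth 0 (s ++ c :: s) (t + M.+1) = nth 0 s t.
  move=> t; rewrite nth_cat.
  have -> : (t + M.+1 < M)%N = false by lia.
  by have -> : (t + M.+1 - M = t.+1)%N by lia.
have nM : nth 0 (s ++ c :: s) M = c by rewrite nth_cat ltnn subnn.
rewrite {1}/Ek sz e2.
rewrite (big_cat_nat _ (n := M)) ?leq_addr // (big_ltn (m := M)); last by lia.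
rewrite -{1}(add0n M.+1) big_addn addnK nM e1 //.
rewrite (eq_big_nat _ _ (F2 := fun i => nth 0 s i * Qref z phi (gd_iter g s y0 i))); last first.
  by move=> i /andP [_ Hi]; rewrite n1 // e1 // ltnW.
set S1 := \sum_(0 <= i < M) nth 0 s i * Qref z phi (gd_iter g s y0 i).
under eq_big_nat => i _ do rewrite n2 e2.
rewrite /Ek -/M -/xM -/x2 -/S1.
under [X in _ = _ + r * X + _ + _]eq_big_nat => i _ do rewrite mulrDr !Qcc_ref.
rewrite big_split /= !sum_Qref Hsum.
set Bs := \sum_(0 <= i < M) nth 0 s i * Bt (x2 i).
set Sv := \sum_(0 <= i < M) nth 0 s i *: g (x2 i).
have HS : Sv = y1 - x2 M by rewrite /x2 (gd_tele s y1 M) opprB addrC subrK.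
rewrite HS /y1 /c /Qref /Qcc.
set xN := x2 M. set gM := g xM. set gN := g xN.
clearbody S1 Bs gN gM xN xM.
dexp.
rewrite ?(dotvC z y0) ?(dotvC xM y0) ?(dotvC gM y0) ?(dotvC xN y0) ?(dotvC gN y0)
  ?(dotvC xM z) ?(dotvC gM z) ?(dotvC xN z) ?(dotvC gN z) ?(dotvC gM xM)
  ?(dotvC xN xM) ?(dotvC gN xM) ?(dotvC xN gM) ?(dotvC gN gM) ?(dotvC gN xN).
by field: Hr.
Qed.
End Alg.


Section Silver.
Context {R : realType}.

Lemma silverS k : silver (R:=R) k.+2 = silver k.+1 ++ (1 + silver_ratio ^+ k) :: silver k.+1.
Proof. by []. Qed.

Lemma rho_ge0 : 0 <= silver_ratio :> R.
Proof. by rewrite /silver_ratio addr_ge0 // sqrtr_ge0. Qed.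

Lemma rho_sq : silver_ratio ^+ 2 = 2 * silver_ratio + 1 :> R.
Proof.
rewrite /silver_ratio.
have Hs : Num.sqrt (2:R) ^+ 2 = 2 by rewrite sqr_sqrtr // ler0n.
ring: Hs.
Qed.

Lemma size_silver k : size (silver (R:=R) k.+1) = (2 ^ k.+1 - 1)%N.
Proof.
elim: k => [//|k IH].
rewrite silverS size_cat /= IH.
have := expn_gt0 2 k.+1; rewrite (expnS 2 k.+1); lia.
Qed.

Lemma sum_silver k :
  \sum_(0 <= i < size (silver (R:=R) k.+1)) nth 0 (silver (R:=R) k.+1) i = silver_ratio ^+ k.+1 - 1 :> R.
Proof.
have L : forall l : seq R, \sum_(0 <= i < size l) nth 0 l i = \sum_(x <- l) x.
  by move=> l; rewrite [RHS](big_nth 0).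
rewrite L; elim: k => [|k IH].
  by rewrite /= big_seq1 expr1 /silver_ratio addrC addKr.
rewrite silverS big_cat big_cons IH.
have Hr := rho_sq.
rewrite !exprS.
rewrite /=; ring: Hr.
Qed.

Lemma silver_ge0 k i : 0 <= nth 0 (silver (R:=R) k.+1) i.
Proof.
have H : forall x, x \in silver (R:=R) k.+1 -> 0 <= x.
  elim: k => [|k IH] x.
    by rewrite inE => /eqP ->; rewrite sqrtr_ge0.
  rewrite silverS mem_cat in_cons => /orP [/IH //|/orP [/eqP ->|/IH //]].
  by rewrite addr_ge0 // exprn_ge0 // rho_ge0.
case: (ltnP i (size (silver (R:=R) k.+1))) => Hi.
  by apply: H; rewrite mem_nth.
by rewrite nth_default.
Qed.
End Silver.

Section Main.
Context {R : realType} {n : nat} (F : 'rV[R]_n -> R) (g : 'rV[R]_n -> 'rV[R]_n).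
Hypotheses (gradF : is_gradient F g) (Cv : convex_fun F) (Lg : one_smooth g).

Lemma Qcc_ge0 u v : 0 <= Qcc F g u v.
Proof.
have := cocoercive F g gradF Lg Cv v u.
rewrite /Qcc /nsq; lra.
Qed.

Lemma Ek_nonneg k y0 z phi :
  0 <= Ek F g (silver k.+1) (silver_ratio ^+ k.+1) y0 z phi.
Proof.
elim: k y0 z phi => [|k IH] y0 z phi.
  rewrite expr1 /=.
  have := Ek_base F g y0 z phi; cbv zeta => ->.
  rewrite -/silver_ratio.
  by rewrite addr_ge0 // ?mulr_ge0 ?rho_ge0 ?Qcc_ge0.
have Hs := sum_silver (R:=R) k; rewrite exprS in Hs.
have H := Ek_step F g (silver k.+1) silver_ratio (silver_ratio ^+ k) y0 z phi rho_sq Hs; cbv zeta in H.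
rewrite silverS !exprS H.
have Hr := rho_ge0 (R:=R).
rewrite -!exprS.
apply: addr_ge0; [apply: addr_ge0; [apply: addr_ge0; [apply: addr_ge0|]|]|].
- exact: IH.
- by apply: mulr_ge0; [apply: exprn_ge0|exact: IH].
- apply: mulr_ge0 => //; apply: sumr_ge0 => i _.
  by apply: mulr_ge0; [exact: silver_ge0|apply: addr_ge0; exact: Qcc_ge0].
- by apply: mulr_ge0 => //; exact: Qcc_ge0.
- by apply: mulr_ge0; [apply: exprn_ge0|exact: Qcc_ge0].
Qed.
End Main.

Theorem lemma1 (R : realType) (n : nat) (F : 'rV[R]_n -> R) (g : 'rV[R]_n -> 'rV[R]_n)
  (xstar : 'rV[R]_n) (k : nat) (x0 : 'rV[R]_n) :
  is_gradient F g -> convex_fun F -> one_smooth g ->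
  (forall y, F xstar <= F y) ->
  (1 <= k)%N ->
  let rho : R := silver_ratio in
  let N := (2 ^ k - 1)%N in
  let h : seq R := silver k in
  let x := gd_iter g h x0 in
  let Fs := F xstar in
  let Q := fun i => Fs - F (x i) - dotv (g (x i)) (xstar - x i)
                    - 2^-1 * enorm (g (x i)) ^+ 2 in
  0 <= (2 * rho ^+ k - 1) * (Fs - F (x N)) + 2^-1 * enorm (x0 - xstar) ^+ 2
       - \sum_(i < N) nth 0 h i * Q i - rho ^+ k * Q N
       - 2^-1 * enorm (x N - rho ^+ k *: g (x N) - xstar) ^+ 2.
Proof.
move=> gradF Cv Lg _.
case: k => [|k] Hk; first by rewrite ltnn in Hk.
cbv zeta.
have := Ek_nonneg F g gradF Cv Lg k x0 xstar (F xstar).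
rewrite -(size_silver (R:=R) k) !enorm_sq /Ek big_mkord /Qref /nsq.
move=> H; under eq_bigr => i _ do rewrite enorm_sq.
exact: H.
Qed.
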